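(* Let $k\ge 4$, $n=2k-1$, $\lambda\in\overline{\mathcal{U}}_{T_n}$, and let $Y=\mathrm{KN}(S_\lambda)$, with $R_i$ its $i$-th row and $C_j$ its $j$-th column. Write the elements of $S_\lambda$ increasingly as $0=s_0<s_1<\cdots$ and let $z$ be the index with $s_z=n-2$. Then $\#R_i=\#C_i+1$ for every $1\le i\le z$, and $\#R_i=\#C_{i+1}$ for every $z+1\le i\le n-2$.
   Context: A partition of $N$ into distinct parts is a sequence $\lambda=(\lambda_1<\dots<\lambda_t)$ of positive integers with sum $N$ and $t\ge 2$, identified with its set of parts. Missing parts: $\mathcal{M}_\lambda=\{1,\dots,\lambda_t\}\setminus\lambda$. $\lambda$ is refinable if two distinct missing parts sum to a part of $\lambda$, unrefinable otherwise; $\mathcal{U}_N$ is the set of unrefinable partitions of $N$. An element of $\mathcal{U}_N$ is maximal if its largest part is the maximum of the largest parts of elements of $\mathcal{U}_N$; $\widetilde{\mathcal{U}}_N$ is the set of these and $\overline{\mathcal{U}}_N=\{\lambda\in\widetilde{\mathcal{U}}_N:\#\mathcal{M}_\lambda=\lfloor\lambda_t/2\rfloor\}$. $T_n=n(n+1)/2$. For $\lambda\in\overline{\mathcal{U}}_{T_n}$ (with $n=2k-1$, $k\ge 4$) one knows $\lambda_t=2n-4$, $t=n-2$ and $n-2\notin\lambda$. $S_\lambda=\mathbb{N}_0\setminus\lambda$. The Keith–Nath transformation sends a set $S\subseteq\mathbb{N}_0$ with $0\in S$ and finite complement to the Young diagram $\mathrm{KN}(S)$ whose boundary is the lattice path that,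 starting at the origin, takes for $j=0,1,\dots,\max(\mathbb{N}_0\setminus S)$ an east step if $j\in S$ and a north step otherwise. Diagrams are in English convention: rows numbered from the top, columns from the left; $\#R_i$, $\#C_j$ denote numbers of cells. *)

(* Defs.v *)
From mathcomp Require Import all_boot.
Set Implicit Arguments. Unset Strict Implicit. Unset Printing Implicit Defensive.

Definition is_dpart (N : nat) (l : seq nat) : bool :=
  [&& sorted ltn l, 0 \notin l, sumn l == N & 1 < size l].

Definition lmax (l : seq nat) : nat := last 0 l.

Definition missing (l : seq nat) : seq nat :=
  [seq i <- iota 1 (lmax l) | i \notin l].

Definition refinable (l : seq nat) : bool :=
  has (fun a => has (fun b => (a != b) && (a + b \in l)) (missing l)) (missing l).

Definition unrefinable (N : nat) (l : seq nat) : bool :=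
  is_dpart N l && ~~ refinable l.

Definition maximal_unref (N : nat) (l : seq nat) : Prop :=
  unrefinable N l /\ forall mu, unrefinable N mu -> lmax mu <= lmax l.

Definition overU (N : nat) (l : seq nat) : Prop :=
  maximal_unref N l /\ size (missing l) = (lmax l)./2.

Definition tri (n : nat) : nat := (n * n.+1)./2.

Definition S_of (l : seq nat) : pred nat := fun x => x \notin l.

(* Keith--Nath: the lattice path takes, for j = 0..m (m = max of the
   complement of S), an east step if j \in S and a north step otherwise.
   Each north step at j bounds a row whose length is the number of east
   steps before it.  In English convention the top row is the last north
   step, so rows listed top to bottom are: *)
Definition KN_rows (S : pred nat) (m : nat) : seq nat :=
  rev [seq count S (iota 0 j) | j <- iota 0 m.+1 & ~~ S j].

(* cell (i, j) (row i from the top, column j from the left, 1-indexed) *)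
Definition KN_cell (S : pred nat) (m : nat) (i j : nat) : bool :=
  [&& 1 <= i, i <= size (KN_rows S m), 1 <= j & j <= nth 0 (KN_rows S m) i.-1].

(* #R_i and #C_j: all rows have length <= m+1 and there are <= m+1 rows *)
Definition KN_row_card (S : pred nat) (m i : nat) : nat :=
  count (fun j => KN_cell S m i j) (iota 1 m.+1).
Definition KN_col_card (S : pred nat) (m j : nat) : nat :=
  count (fun i => KN_cell S m i j) (iota 1 m.+1).

(* Main.v *)
Require Import Defs.
From mathcomp Require Import all_boot zify.
Set Implicit Arguments. Unset Strict Implicit. Unset Printing Implicit Defensive.

Lemma PS_odd h (F : nat -> nat) :
  \sum_(1 <= a < h.*2.+1) F a = \sum_(1 <= a < h.+1) (F a + F (h.*2.+1 - a)).
Proof.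
elim: h F => [|h IH] F; first by rewrite !big_geq.
have e1 : (h.+1).*2.+1 = (h.*2.+2).+1 by rewrite doubleS.
rewrite e1 big_nat_recl // big_nat_recr //=.
rewrite (IH (fun a => F a.+1)).
rewrite [in RHS]big_nat_recl //.
have -> : \sum_(1 <= i < h.+1) (F i.+1 + F (h.*2.+3 - i.+1)) =
          \sum_(1 <= i < h.+1) (F i.+1 + F (h.*2.+1 - i).+1).
  apply: eq_big_nat => i /andP[i1 ih]; congr (_ + F _); lia.
have -> : h.*2.+3 - 1 = h.*2.+2 by lia.
lia.
Qed.

Lemma PS_even h (F : nat -> nat) :
  \sum_(1 <= a < h.*2.+2) F a =
  \sum_(1 <= a < h.+1) (F a + F (h.*2.+2 - a)) + F h.+1.
Proof.
rewrite big_nat_recl // (PS_odd h (fun a => F a.+1)) !big_split /=.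
have -> : \sum_(1 <= i < h.+1) F (h.*2.+1 - i).+1 = \sum_(1 <= i < h.+1) F (h.*2.+2 - i).
  apply: eq_big_nat => i /andP[i1 ih]; congr F; lia.
have : \sum_(1 <= i < h.+2) F i = F 1 + \sum_(1 <= i < h.+1) F i.+1 by rewrite big_nat_recl.
rewrite big_nat_recr //=; lia.
Qed.

Lemma sum_le_eq lo hi (t b : nat -> nat) :
  (forall a, lo <= a < hi -> t a <= b a) ->
  \sum_(lo <= a < hi) b a <= \sum_(lo <= a < hi) t a ->
  forall a, lo <= a < hi -> t a = b a.
Proof.
move=> tb sb.
have E : \sum_(lo <= a < hi) t a + \sum_(lo <= a < hi) (b a - t a) = \sum_(lo <= a < hi) b a.
  rewrite -big_split /=; apply: eq_big_nat => a /tb; lia.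
have : \sum_(lo <= a < hi) (b a - t a) == 0 by apply/eqP; lia.
rewrite sum_nat_seq_eq0 => /allP H a ah.
have := H a; rewrite mem_index_iota ah /= => /(_ isT) /eqP; have := tb a ah; lia.
Qed.

Lemma count_sum (P : pred nat) s : count P s = \sum_(a <- s) P a.
Proof. by elim: s => [|x s IH]; rewrite ?big_nil ?big_cons //= IH. Qed.

Lemma sum_id h : (\sum_(1 <= a < h.+1) a).*2 = h * h.+1.
Proof.
elim: h => [|h IH]; first by rewrite big_geq.
rewrite big_nat_recr //= doubleD IH; lia.
Qed.

Lemma sumn_sorted s N : sorted ltn s -> (forall x, x \in s -> 0 < x <= N) ->
  sumn s = \sum_(1 <= a < N.+1) a * (a \in s).
Proof.
move=> ss sb.
have fl : [seq a <- iota 1 N | a \in s] = s.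
  apply: (irr_sorted_eq ltn_trans ltnn) => //.
    exact: (sorted_filter ltn_trans _ (iota_ltn_sorted 1 N)).
  move=> x; rewrite mem_filter mem_iota.
  case xl: (x \in s) => //=; have := sb x xl; lia.
rewrite sumnE -{1}fl big_filter big_mkcond /index_iota subSS subn0.
by apply: eq_bigr => a _; case: (a \in s); rewrite ?muln1 ?muln0.
Qed.

Lemma tri2 n : (tri n).*2 = n * n.+1.
Proof.
rewrite /tri -[RHS](odd_double_half (n * n.+1)) oddM /= andbN add0n.
done.
Qed.

Lemma sumn_iota1 k : (sumn (iota 1 k)).*2 = k * k.+1.
Proof.
elim: k => [//|k IH].
have -> : iota 1 k.+1 = iota 1 k ++ [:: k.+1] by rewrite -[k.+1]addn1 iotaD add1n addn1.
rewrite sumn_cat doubleD IH /=; lia.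
Qed.

Definition mu_of n := iota 1 (n - 3) ++ [:: n.+1; (n - 2).*2].

Lemma mu_unref n : 7 <= n -> unrefinable (tri n) (mu_of n) /\ lmax (mu_of n) = (n - 2).*2.
Proof.
move=> n7; have lm : lmax (mu_of n) = (n - 2).*2 by rewrite /lmax /mu_of last_cat.
split=> //; apply/andP; split.
  apply/and4P; split.
  - rewrite (sorted_pairwise ltn_trans) pairwise_cat -(sorted_pairwise ltn_trans).
    rewrite iota_ltn_sorted /= andbT; apply/andP; split; last lia.
    by apply/allrelP => x y; rewrite mem_iota !inE => H1 /orP[] /eqP ->; lia.
  - by rewrite /mu_of mem_cat mem_iota !inE; lia.
  - apply/eqP; apply: double_inj; rewrite tri2 /mu_of sumn_cat doubleD sumn_iota1 /=.
    have -> : n = (n - 7) + 7 by lia.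
    move: (n - 7) => p; nia.
  - by rewrite /mu_of size_cat /=; lia.
rewrite /refinable /missing lm; apply/hasPn => a; rewrite mem_filter mem_iota => /andP[ana ar].
apply/hasPn => b; rewrite mem_filter mem_iota => /andP[bnb br].
apply/negP => /andP[ab abin].
move: ana bnb abin ab; rewrite /mu_of !mem_cat !mem_iota !inE; lia.
Qed.

Lemma path_le_last y s x : path ltn y s -> x \in y :: s -> x <= last y s.
Proof.
elim: s y x => [|z s IH] y x /=; first by rewrite inE => _ /eqP->.
move=> /andP[yz pz]; rewrite inE => /orP[/eqP->|xin].
  have := IH z z pz (mem_head _ _); lia.
exact: IH.
Qed.

Lemma sorted_le_last s x : sorted ltn s -> x \in s -> x <= last 0 s.
Proof. case: s => [//|y s] /= ps xin; exact: path_le_last. Qed.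

Lemma structure k n lam : 4 <= k -> n = 2 * k - 1 -> overU (tri n) lam ->
  [/\ sorted ltn lam, 0 \notin lam, last 0 lam = (n - 2).*2,
      (forall x, x <= (n - 2).*2 -> x != n - 2 -> (x \notin lam) = ((n - 2).*2 - x \in lam))
    & (n - 2) \notin lam].
Proof.
move=> k4 nk [[/andP[/and4P[slam l0 /eqP sm sz] nref] maxl] szm].
have n7 : 7 <= n by lia.
have mge : (n - 2).*2 <= lmax lam.
  by have [u lu] := mu_unref n7; have := maxl _ u; rewrite lu.
rewrite /lmax in mge szm *.
set m := last 0 lam in mge szm *.
have lam_le x : x \in lam -> 0 < x <= m.
  move=> xl; rewrite /m sorted_le_last // andbT lt0n.
  by apply/eqP => x0; move: l0; rewrite -x0 xl.
have mlam : m \in lam.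
  by case: lam slam sz {l0 sm nref maxl szm lam_le} @m mge => [//|y s] /= *; exact: mem_last.
have notboth a : 1 <= a < m -> a != m - a -> (a \in lam) || (m - a \in lam).
  move=> ar am; apply/negPn/negP => /norP [al ml].
  move/hasPn: nref => /(_ a); rewrite /missing -/m mem_filter mem_iota al.
  have -> : 1 <= a < 1 + m by lia.
  move=> /(_ isT) /hasPn /(_ (m - a)); rewrite mem_filter mem_iota ml.
  have -> : 1 <= m - a < 1 + m by lia.
  by rewrite am /= subnKC ?mlam //; lia.
have msum : \sum_(1 <= a < m) (a \notin lam : nat) = m./2.
  rewrite -szm /missing -/m size_filter count_sum.
  have -> : iota 1 m = index_iota 1 m.+1 by rewrite /index_iota subSS subn0.
  by rewrite big_nat_recr /= ?mlam ?addn0 //; lia.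
have ssum : sumn lam = \sum_(1 <= a < m) a * (a \in lam) + m.
  by rewrite (sumn_sorted slam lam_le) big_nat_recr ?mlam ?muln1 //; lia.
have t2 := tri2 n; rewrite -sm ssum in t2.
have ub1 (b : bool) : (b : nat) <= 1 by case: b.
have tb a : 1 <= a < m -> a != m - a ->
    (a \notin lam : nat) + (m - a \notin lam : nat) <= 1.
  by move=> H1 H2; have := notboth a H1 H2; case: (a \in lam); case: (m - a \in lam).
have termE a : a.*2 <= m -> (a \notin lam : nat) + (m - a \notin lam : nat) = 1 ->
    a * (a \in lam) + (m - a) * (m - a \in lam) = a + (m - a.*2) * (a \notin lam).
  by move=> H; case: (a \in lam); case: (m - a \in lam) => /=; lia.
case: (boolP (odd m)) => om.
  exfalso.
  set h := m./2 in msum.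
  have mh : m = h.*2.+1 by rewrite /h -[in LHS](odd_double_half m) om.
  have E := PS_odd h (fun a => (a \notin lam : nat)); rewrite -mh msum in E.
  have one : forall a, 1 <= a < h.+1 -> (a \notin lam : nat) + (m - a \notin lam : nat) = 1.
    apply: (sum_le_eq (b := fun _ => 1)).
      by move=> a ar; apply: tb; lia.
    by rewrite sum_nat_const_nat -E; lia.
  have Q := PS_odd h (fun a => a * (a \in lam)); rewrite -mh in Q.
  rewrite Q in t2.
  have Qe : \sum_(1 <= a < h.+1) (a * (a \in lam) + (m - a) * (m - a \in lam)) =
     \sum_(1 <= a < h.+1) a + \sum_(1 <= a < h.+1) (m - a.*2) * (a \notin lam).
    rewrite -big_split; apply: eq_big_nat => a ar /=; apply: termE; [lia | exact: one].
  rewrite Qe in t2.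
  have s2 := sum_id h.
  move: t2 s2; set S1 := \sum_(1 <= a < h.+1) a; set Y := \sum_(1 <= a < h.+1) _ => t2 s2.
  have hle : h <= n - 2.
    case: (leqP h (n - 2)) => // hlt.
    have : (n - 1) * n <= h * h.+1 by apply: leq_mul; lia.
    lia.
  have hn : h = n - 2 by lia.
  have Y2 : Y = 2.
    rewrite hn in s2 mh; rewrite mh in t2.
    have nE : n = (n - 7) + 7 by lia.
    rewrite nE in t2 s2.
    move: t2 s2; move: (n - 7) => p; nia.
  move: Y2; rewrite /Y big_nat_recr /=; last lia.
  have -> : m - h.*2 = 1 by lia.
  have : (fun x => (x == 0) || (2 < x)) (\sum_(1 <= i < h) (m - i.*2) * (i \notin lam)).
    rewrite big_seq; apply: (@big_ind _ (fun x => (x == 0) || (2 < x))) => //.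
      by move=> x y /orP[/eqP->|x2] /orP[/eqP->|y2]; rewrite ?addn0 ?add0n ?x2 ?orbT //; lia.
    move=> i; rewrite mem_index_iota => ir; case: (i \notin lam); rewrite ?muln0 ?muln1 //=.
    lia.
  by case: (h \notin lam) => /=; lia.
have m2 : m = m./2.*2 by rewrite -[in LHS](odd_double_half m) (negbTE om).
set h := (m./2).-1.
have mh : m = h.*2.+2 by rewrite /h; lia.
have hm : m./2 = h.+1 by rewrite /h; lia.
rewrite hm in msum.
have E := PS_even h (fun a => (a \notin lam : nat)); rewrite -mh msum in E.
have E1 : \sum_(1 <= a < h.+1) ((a \notin lam : nat) + (m - a \notin lam : nat)) <= h.
  apply: (@leq_trans (\sum_(1 <= a < h.+1) 1)); last by rewrite sum_nat_const_nat; lia.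
  rewrite big_seq [X in _ <= X]big_seq; apply: leq_sum => a.
  by rewrite mem_index_iota => ar; apply: tb; lia.
have uh : (h.+1 \notin lam : nat) = 1 by have := ub1 (h.+1 \notin lam); lia.
have one : forall a, 1 <= a < h.+1 -> (a \notin lam : nat) + (m - a \notin lam : nat) = 1.
  apply: (sum_le_eq (b := fun _ => 1)).
    by move=> a ar; apply: tb; lia.
  by rewrite sum_nat_const_nat; lia.
have Q := PS_even h (fun a => a * (a \in lam)); rewrite -mh in Q.
rewrite Q in t2.
have Qe : \sum_(1 <= a < h.+1) (a * (a \in lam) + (m - a) * (m - a \in lam)) =
   \sum_(1 <= a < h.+1) a + \sum_(1 <= a < h.+1) (m - a.*2) * (a \notin lam).
  rewrite -big_split; apply: eq_big_nat => a ar /=; apply: termE; [lia | exact: one].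
rewrite Qe in t2.
have hl : (h.+1 \in lam) = false by move: uh; case: (h.+1 \in lam).
rewrite hl muln0 addn0 in t2.
have s2 := sum_id h.
have Yev : ~~ odd (\sum_(1 <= a < h.+1) (m - a.*2) * (a \notin lam)).
  rewrite big_seq; apply: (@big_ind _ (fun x => ~~ odd x)) => //.
    by move=> x y; rewrite oddD => /negbTE-> /negbTE->.
  move=> a; rewrite mem_index_iota => ar.
  have -> : m - a.*2 = (h.+1 - a).*2 by lia.
  by rewrite oddM odd_double.
move: t2 s2 Yev; set S1 := \sum_(1 <= a < h.+1) a; set Y := \sum_(1 <= a < h.+1) _ => t2 s2 Yev.
have hle : h <= n - 2.
  case: (leqP h (n - 2)) => // hlt.
  have : (n - 1) * n <= h * h.+1 by apply: leq_mul; lia.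
  lia.
have hn : h = n - 3.
  case: (eqVneq h (n - 2)) => [hn2|hn2]; last lia.
  exfalso; have Y1 : Y = 1.
    rewrite hn2 in s2 mh; rewrite mh in t2.
    have nE : n = (n - 7) + 7 by lia.
    rewrite nE in t2 s2.
    move: t2 s2; move: (n - 7) => p; nia.
  by rewrite Y1 in Yev.
have cE : n - 2 = h.+1 by lia.
have mE : (n - 2).*2 = m by lia.
rewrite mE cE; split => //.
  move=> x xm xc.
  case: (posnP x) => [->|x0]; first by rewrite subn0 mlam.
  case: (eqVneq x m) => [->|xnm]; first by rewrite subnn mlam (negbTE l0).
  case: (ltnP x h.+1) => xh.
    have := one x; rewrite x0 xh => /(_ isT).
    by case: (x \in lam); case: (m - x \in lam).
  have := one (m - x); rewrite subKn // => /(_ ltac:(lia)).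
  by case: (x \in lam); case: (m - x \in lam).
by rewrite hl.
Qed.
Lemma rank_gt s x : sorted ltn s -> x \in s ->
  count (fun q => x < q) s = size s - (index x s).+1.
Proof.
elim: s => [//|y s IH] /= ps.
have ss := path_sorted ps.
have ay := order_path_min ltn_trans ps.
rewrite inE; case: eqP => [->|nxy] /=.
  move=> _; rewrite ltnn add0n eqxx subSS subn0; apply/eqP; rewrite -all_count //.
move=> xin; rewrite IH //.
have yx : y < x by move/allP: ay => /(_ x xin).
have -> : (x < y) = false by lia.
have := index_mem x s; rewrite xin; case: eqP => [yx0|_]; first lia; lia.
Qed.

Lemma count_iota_le r N : r <= N -> count (fun j => j <= r) (iota 1 N) = r.
Proof.
move=> rN; rewrite -(subnKC rN) iotaD count_cat.
rewrite (eq_in_count (a2 := predT)); last by move=> j; rewrite mem_iota /=; lia.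
rewrite count_predT size_iota (eq_in_count (a2 := pred0)) ?count_pred0 ?addn0 //.
by move=> j; rewrite mem_iota /=; lia.
Qed.

Lemma count_refl (P : pred nat) N :
  count P (iota 0 N.+1) = count (fun y => P (N - y)) (iota 0 N.+1).
Proof.
elim: N P => [|N IH] P; first by rewrite /= subn0.
have E1 : iota 0 N.+2 = iota 0 N.+1 ++ [:: N.+1] by rewrite -addn1 iotaD.
have E2 : iota 0 N.+2 = 0 :: map (addn 1) (iota 0 N.+1)
  by rewrite /= -iotaDl.
rewrite {1}E1 E2 count_cat IH [count _ (_ :: _)]/= -cat1s count_cat count_map.
rewrite [count _ [:: 0]]/= subn0 addn0 addnC; congr (_ + _).

Qed.

Lemma KN_main (lam : seq nat) (c : nat) :
  0 < c -> sorted ltn lam -> 0 \notin lam -> last 0 lam = c.*2 ->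
  (forall x, x <= c.*2 -> x != c -> (x \notin lam) = (c.*2 - x \in lam)) ->
  c \notin lam ->
  (forall i, 1 <= i <= count (S_of lam) (iota 0 c) ->
     KN_row_card (S_of lam) (c.*2) i = KN_col_card (S_of lam) (c.*2) i + 1) /\
  (forall i, count (S_of lam) (iota 0 c) + 1 <= i <= c ->
     KN_row_card (S_of lam) (c.*2) i = KN_col_card (S_of lam) (c.*2) i.+1).
Proof.
move=> c0 slam l0 lastm sym cS.
set m := c.*2; set S := S_of lam.
pose g q := count S (iota 0 q).
have gS q : g q.+1 = g q + S q.
  by rewrite /g -addn1 iotaD count_cat [count _ (iota _ 1)]/= addn0.
have gmono a b : a <= b -> g a <= g b.
  by move=> ab; rewrite /g -(subnKC ab) iotaD count_cat leq_addr.
have gle q : g q <= q by rewrite /g -{2}(size_iota 0 q) count_size.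
have gex N v : v < g N -> exists x, [/\ x < N, S x & g x = v].
  elim: N => [|N IH]; first by rewrite /g.
  rewrite gS; case SN: (S N); rewrite ?addn0 ?addn1 => vlt.
    case: (ltnP v (g N)) => [/IH [x [xN Sx gx]]|vge].
      by exists x; split => //; lia.
    by exists N; split => //; lia.
  by case: (IH vlt) => x [xN Sx gx]; exists x; split => //; lia.
have mlam : m \in lam.
  case: lam slam l0 lastm sym cS {S g gS gmono gle gex} => [|y s] /= _ _.
    move=> e; rewrite /m; lia.
  by move=> e *; rewrite /m -e mem_last.
have lam_le x : x \in lam -> 0 < x <= m.
  move=> xl; rewrite /m -lastm sorted_le_last // andbT lt0n.
  by apply/eqP => x0; move: l0; rewrite -x0 xl.
have flt : [seq j <- iota 0 m.+1 | ~~ S j] = lam.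
  apply: (irr_sorted_eq ltn_trans ltnn) => //.
    exact: (sorted_filter ltn_trans _ (iota_ltn_sorted 0 m.+1)).
  move=> x; rewrite mem_filter mem_iota /S /S_of negbK.
  case xl: (x \in lam) => //=; have := lam_le x xl; lia.
have mc : m - c = c by rewrite /m; lia.
have Sc : S c by [].
have splitc w : count S (iota 0 w) = count (fun y => S y && (y != c)) (iota 0 w) + (c < w).
  have -> : ((c < w) : nat) = count (pred1 c) (iota 0 w).
    by rewrite (count_uniq_mem _ (iota_uniq 0 w)) mem_iota.
  elim: (iota 0 w) => //= y s ->.
  case: (eqVneq y c) => [->|yc]; first by rewrite Sc /=; lia.
  by rewrite andbT; lia.
have cnt_gt x : x <= m -> count (fun q => x < q) lam = g (m - x) - (c < m - x).
  move=> xm; rewrite -flt count_filter count_refl.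
  rewrite (eq_in_count (a2 := fun y => (S y && (y != c)) && (y < m - x))); last first.
    move=> y; rewrite mem_iota => /andP[_ ym] /=.
    case: (eqVneq y c) => [->|yc]; first by rewrite mc Sc /= andbF.
    have E : (y \notin lam) = (m - y \in lam) by apply: sym => //; lia.
    rewrite /S /S_of negbK -E andbT andbC; congr (_ && _); lia.
  have wm : m - x <= m.+1 by lia.
  rewrite -(subnKC wm) iotaD count_cat.
  rewrite (eq_in_count (a1 := fun y => _ && (y < m - x)) (a2 := pred0) (s := iota (0 + (m - x)) _)); last first.
    by move=> y; rewrite mem_iota /=; move=> H; apply/negbTE; lia.
  rewrite count_pred0 addn0 /g (splitc (m - x)) addnK.
  apply: eq_in_count => y; rewrite mem_iota /= => H.
  have -> : y < m - x by lia.
  by rewrite andbT.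
have gm : g m = c.+1 /\ size lam = c.
  have h1 := cnt_gt 0 (leq0n m).
  have h2 : count (fun q => 0 < q) lam = size lam.
    rewrite (eq_in_count (a2 := predT)) ?count_predT // => q /lam_le /=; lia.
  have h3 := count_predC S (iota 0 m.+1).
  have h4 : count (predC S) (iota 0 m.+1) = size lam by rewrite -[in RHS]flt size_filter.
  have h5 : count S (iota 0 m.+1) = g m.
    by rewrite -/(g m.+1) gS /S /S_of mlam addn0.
  have h6 : g c.+1 <= g m by apply: gmono; rewrite /m; lia.
  rewrite gS Sc in h6.
  rewrite size_iota h4 h5 in h3.
  rewrite subn0 h2 in h1.
  have cm : c < m by rewrite /m; lia.
  rewrite cm in h1; rewrite /m in h1 h3 h6 cm *; move: h1 h3 h6 cm; rewrite /nat_of_bool; lia.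
case: gm => gm szlam.
have rowE i : 1 <= i <= c -> KN_row_card S m i = g (nth 0 lam (c - i)).
  move=> /andP[i1 ic].
  have ci : c - i < size lam by rewrite szlam; lia.
  have nl : nth 0 lam (c - i) \in lam by apply: mem_nth.
  have rm : g (nth 0 lam (c - i)) <= m.
    by apply: leq_trans (gle _) _; have := lam_le _ nl; lia.
  rewrite /KN_row_card /KN_cell /KN_rows -/S flt size_rev size_map szlam.
  rewrite nth_rev ?size_map ?szlam; last by lia.
  rewrite (nth_map 0); last by rewrite szlam; lia.
  have -> : c - i.-1.+1 = c - i by lia.
  rewrite -[X in _ = X](count_iota_le (N := m.+1)) //; last by lia.
  apply: eq_in_count => j; rewrite mem_iota => /andP[j1 _].
  by rewrite i1 ic j1.
have colE j : 1 <= j -> KN_col_card S m j = count (fun q => j <= g q) lam.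
  move=> j1; rewrite /KN_col_card /KN_cell /KN_rows -/S flt size_rev size_map szlam.
  have cm : c <= m.+1 by rewrite /m; lia.
  rewrite -(subnKC cm) iotaD count_cat.
  rewrite [X in _ + X](eq_in_count (a2 := pred0)); last first.
    by move=> y; rewrite mem_iota => H; apply/negbTE; apply/negP => /and4P[]; lia.
  rewrite count_pred0 addn0.
  rewrite (eq_in_count (a2 := fun i => j <= nth 0 (rev (map g lam)) i.-1)); last first.
    move=> y; rewrite mem_iota => H; rewrite j1 /=; have -> : 0 < y by lia.
    by have -> : y <= c by lia.
  rewrite -[1]addn0 iotaDl count_map.
  set R := rev (map g lam).
  have -> : count (preim (addn 1) (fun i => j <= nth 0 R i.-1)) (iota 0 c)
          = count (fun r => j <= r) (map (nth 0 R) (iota 0 c)) by rewrite count_map.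
  have szR : size R = c by rewrite size_rev size_map szlam.
  by rewrite -szR -/(mkseq _ _) mkseq_nth /R count_rev count_map.
have colS x : S x -> KN_col_card S m (g x).+1 = count (fun q => x < q) lam.
  move=> Sx; rewrite colE //; apply: eq_in_count => q ql /=.
  case: (ltnP x q) => xq.
    have := gmono _ _ xq; rewrite gS Sx; lia.
  have qx : q < x.
    rewrite ltn_neqAle xq andbT; apply/eqP => qx.
    by move: Sx; rewrite /S /S_of -qx ql.
  have := gmono _ _ qx; rewrite gS; lia.
have idxE p i : p \in lam -> 1 <= i -> count (fun q => p < q) lam = i - 1 ->
    i <= c /\ nth 0 lam (c - i) = p.
  move=> pl i1 cp; have := rank_gt slam pl; rewrite cp szlam.
  have := index_mem p lam; rewrite pl szlam => H1 H2.
  split; first lia.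
  have -> : c - i = index p lam by lia.
  exact: nth_index.
split.
  move=> i; rewrite -/S -/(g c) => /andP[i1 iz].
  have [x [xc Sx gx]] : exists x, [/\ x < c, S x & g x = i - 1] by apply: gex; lia.
  have xm : x <= m by rewrite /m; lia.
  have pl : m - x \in lam by rewrite -sym //; lia.
  have mx : m - (m - x) = x by lia.
  have cpx : count (fun q => m - x < q) lam = i - 1.
    rewrite cnt_gt ?leq_subr // mx gx; have -> : (c < x) = false by lia.
    by rewrite subn0.
  have [ic nthE] := idxE _ _ pl i1 cpx.
  rewrite rowE ?i1 ?ic // nthE.
  have -> : i = (g x).+1 by lia.
  rewrite colS // cnt_gt //.
  have cl : c < m - x by rewrite /m; lia.
  rewrite cl.
  have := gmono c.+1 (m - x) cl; rewrite gS Sc => H; rewrite /nat_of_bool in H *; lia.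
move=> i; rewrite -/S -/(g c) => /andP[i1 ic].
have [x [xm Sx gx]] : exists x, [/\ x < m, S x & g x = i] by apply: gex; lia.
have cx : c < x by case: (ltnP c x) => // H; have := gmono _ _ H; lia.
have pl : m - x \in lam by rewrite -sym //; lia.
have mx : m - (m - x) = x by lia.
have cpx : count (fun q => m - x < q) lam = i - 1.
  by rewrite cnt_gt ?leq_subr // mx gx cx subn1.
have i1' : 1 <= i by lia.
have [ic' nthE] := idxE _ _ pl i1' cpx.
rewrite rowE ?i1' ?ic // nthE.
have -> : i.+1 = (g x).+1 by lia.
rewrite colS // cnt_gt; last lia.
have -> : (c < m - x) = false by rewrite /m; lia.
by rewrite subn0.
Qed.

Theorem lemma3p6 (k n : nat) (lam : seq nat) (z : nat) :
  4 <= k -> n = 2 * k - 1 ->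
  overU (tri n) lam ->
  z = count (S_of lam) (iota 0 (n - 2)) ->
  (forall i, 1 <= i <= z ->
     KN_row_card (S_of lam) (lmax lam) i = KN_col_card (S_of lam) (lmax lam) i + 1) /\
  (forall i, z + 1 <= i <= n - 2 ->
     KN_row_card (S_of lam) (lmax lam) i = KN_col_card (S_of lam) (lmax lam) i.+1).
Proof.
move=> k4 nk ov ->.
have [slam l0 lastm sym cS] := structure k4 nk ov.
have c0 : 0 < n - 2 by lia.
rewrite /lmax lastm.
exact: KN_main c0 slam l0 lastm sym cS.
Qed.
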